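(* Let $X$ be a path-connected finite down-wide poset and let $f\colon X\to\mathbb R$ be an injective Morse function satisfying the Exclusion condition. Let $a<b$ and suppose the interval $(a,b]$ contains no critical values of $f$ and contains exactly one regular value $e=f(y)$. Then there exists $z\in X_a$ with $z\prec y$ or $y\prec z$.
   Context: A finite poset is regarded as a finite $T_0$-space whose open sets are down-sets; $U_x=\{y: y\le x\}$. Write $a\prec b$ if $a<b$ and there is no $c$ with $a<c<b$. $X$ is down-wide if $\#\{y:y\prec x\}\ge2$ for every non-minimal $x$. A Morse function on $X$ is a map $f\colon X\to\mathbb R$ such that for every $x$, $\#\{y: x\prec y,\ f(x)\ge f(y)\}\le1$ and $\#\{w: w\prec x,\ f(w)\ge f(x)\}\le 1$; $x$ is critical if both sets are empty, regular otherwise; critical (regular) values are images of critical (regular) points. $f$ satisfies the Exclusion condition if for every regular $x$ exactly one of the two sets is nonempty. For $t\in\mathbb R$, $X_t=\bigcup_{f(x)\le t}U_x$. *)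

(* Defs.v *)
From mathcomp Require Import all_boot.
From Stdlib Require Import Reals.

Set Implicit Arguments.
Unset Strict Implicit.
Unset Printing Implicit Defensive.

Definition is_poset (X : finType) (le : X -> X -> Prop) : Prop :=
  (forall x, le x x) /\
  (forall x y, le x y -> le y x -> x = y) /\
  (forall x y z, le x y -> le y z -> le x z).

Definition plt (X : finType) (le : X -> X -> Prop) (x y : X) : Prop :=
  le x y /\ x <> y.

Definition covers (X : finType) (le : X -> X -> Prop) (a b : X) : Prop :=
  plt le a b /\ ~ (exists c, plt le a c /\ plt le c b).

Definition down_wide (X : finType) (le : X -> X -> Prop) : Prop :=
  forall x, (exists y, plt le y x) ->
    exists y1 y2, y1 <> y2 /\ covers le y1 x /\ covers le y2 x.

(* Topology: open sets are down-sets. *)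
Definition down_set (X : finType) (le : X -> X -> Prop) (U : X -> Prop) : Prop :=
  forall x y, le y x -> U x -> U y.

Definition open_in_unit (S : R -> Prop) : Prop :=
  forall t, (0 <= t <= 1)%R -> S t ->
    exists eps, (0 < eps)%R /\
      forall s, (0 <= s <= 1)%R -> (Rabs (s - t) < eps)%R -> S s.

(* continuous path [0,1] -> X (values outside [0,1] irrelevant) *)
Definition cont_path (X : finType) (le : X -> X -> Prop) (g : R -> X) : Prop :=
  forall U, down_set le U -> open_in_unit (fun t => U (g t)).

Definition path_connected (X : finType) (le : X -> X -> Prop) : Prop :=
  forall x y : X, exists g : R -> X, cont_path le g /\ g 0%R = x /\ g 1%R = y.

Definition up_bad (X : finType) (le : X -> X -> Prop) (f : X -> R) (x y : X) : Prop :=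
  covers le x y /\ (f y <= f x)%R.
Definition down_bad (X : finType) (le : X -> X -> Prop) (f : X -> R) (x w : X) : Prop :=
  covers le w x /\ (f w >= f x)%R.

Definition at_most_one (X : Type) (P : X -> Prop) : Prop :=
  forall a b, P a -> P b -> a = b.

Definition morse (X : finType) (le : X -> X -> Prop) (f : X -> R) : Prop :=
  forall x, at_most_one (up_bad le f x) /\ at_most_one (down_bad le f x).

Definition critical (X : finType) (le : X -> X -> Prop) (f : X -> R) (x : X) : Prop :=
  (~ exists y, up_bad le f x y) /\ (~ exists w, down_bad le f x w).

Definition regular (X : finType) (le : X -> X -> Prop) (f : X -> R) (x : X) : Prop :=
  ~ critical le f x.

Definition exclusion (X : finType) (le : X -> X -> Prop) (f : X -> R) : Prop :=
  forall x, regular le f x ->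
    ((exists y, up_bad le f x y) /\ ~ (exists w, down_bad le f x w)) \/
    (~ (exists y, up_bad le f x y) /\ (exists w, down_bad le f x w)).

(* X_t = union of U_x over f x <= t *)
Definition sublevel (X : finType) (le : X -> X -> Prop) (f : X -> R) (t : R) (z : X) : Prop :=
  exists x, (f x <= t)%R /\ le z x.

(* Main.v *)
Require Import Defs.
From mathcomp Require Import all_boot.
From Stdlib Require Import Reals Lra Classical.

Theorem mainTheorem9 (X : finType) (le : X -> X -> Prop) (f : X -> R)
  (a b : R) (y : X) :
  is_poset le ->
  path_connected le ->
  down_wide le ->
  injective f ->
  morse le f ->
  exclusion le f ->
  (a < b)%R ->
  (* no critical values in (a,b] *)
  (forall x, critical le f x -> ~ ((a < f x)%R /\ (f x <= b)%R)) ->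
  (* exactly one regular value in (a,b], namely e = f y *)
  regular le f y -> (a < f y)%R -> (f y <= b)%R ->
  (forall x, regular le f x -> (a < f x)%R -> (f x <= b)%R -> f x = f y) ->
  exists z, sublevel le f a z /\ (covers le z y \/ covers le y z).
Proof.
  intros [Hrefl _] _ Hdw Hinj Hmorse _ _ Hcrit Hreg Hay Hyb Huniq.
  assert (key : forall u, (f u < f y)%R -> sublevel le f a u).
  { intros u Hu. destruct (Rle_or_lt (f u) a) as [Hle|Hlt].
    - exists u. split; [exact Hle | apply Hrefl].
    - exfalso. destruct (classic (critical le f u)) as [Hc|Hc].
      + apply (Hcrit u Hc). split; lra.
      + assert (E := Huniq u Hc Hlt ltac:(lra)). lra. }
  unfold regular, critical in Hreg.
  destruct (classic (exists y', up_bad le f y y')) as [[y' [Hc Hf]]|Hnu].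
  - destruct (Req_dec (f y') (f y)) as [E|E].
    + destruct Hc as [[_ Hne] _]. exfalso.
      apply Hne. symmetry. exact (Hinj _ _ E).
    + exists y'. split; [apply key; lra | right; exact Hc].
  - destruct (classic (exists w, down_bad le f y w)) as [[w [Hcw _]]|Hnd];
      [| exfalso; tauto].
    destruct (Hdw y (ex_intro _ w (proj1 Hcw))) as [y1 [y2 [Hne [C1 C2]]]].
    destruct (Hmorse y) as [_ Hdown].
    destruct (classic (down_bad le f y y1)) as [D1|D1].
    + destruct (classic (down_bad le f y y2)) as [D2|D2].
      * exfalso. exact (Hne (Hdown _ _ D1 D2)).
      * exists y2. split; [apply key | left; exact C2].
        destruct (Rlt_or_le (f y2) (f y)) as [h|h]; [exact h|].
        exfalso; apply D2; split; [exact C2 | lra].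
    + exists y1. split; [apply key | left; exact C1].
      destruct (Rlt_or_le (f y1) (f y)) as [h|h]; [exact h|].
      exfalso; apply D1; split; [exact C1 | lra].
Qed.
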